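(* Let $\ell:K(H\times\mathrm{Id})\to HM$ be an abstract GSOS rule with $\ell$-interpretation $b$, let $k'=b^\sharp\cdot Mc^{-1}\cdot MHb^\sharp:MHMC\to C$, and let $V$ be an endofunctor with $MHM+V$ iteratable. Then every guarded recursive program scheme $e:V\to T^{MHM+V}$ has a unique interpreted solution $s:VC\to C$ in the cia $(C,k')$, and $[k',s]:(MHM+V)C\to C$ is a completely iterative algebra for $MHM+V$.
   Context: Let $\mathcal A$ be a category with binary products and coproducts, let $H:\mathcal A\to\mathcal A$ be a functor with a terminal coalgebra $c:C\to HC$ (an isomorphism by Lambek's lemma), and let $K:\mathcal A\to\mathcal A$ be a functor such that every object $X$ has a free $K$-algebra $\varphi_X:KMX\to MX$ with universal morphism $\eta_X:X\to MX$; $(M,\eta,\mu)$ is the free monad on $K$. For a $K$-algebra $a:KA\to A$ let $a^\sharp:MA\to A$ be the unique $K$-algebra homomorphism with $a^\sharp\cdot\eta_A=\mathrm{id}_A$. An abstract GSOS rule is a natural transformation $\ell:K(H\times\mathrm{Id})\to HM$; its $\ell$-interpretation is the unique $b:KC\to C$ with $c\cdot b=Hb^\sharp\cdot\ell_C\cdot K\langle c,\mathrm{id}_C\rangle$. A $G$-algebra $a:GA\to A$ is a completely iterative algebra (cia) if every $e:X\to GX+A$ has a unique $e^\dagger:X\to A$ with $e^\dagger=[a,\mathrm{id}_A]\cdot(Ge^\dagger+\mathrm{id}_A)\cdot e$; $(C,k')$ is a cia for $MHM$. An endofunctor $G$ is iteratable if for each $X$ a terminal coalgebra $T^GX$ for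 $G(-)+X$ exists, with inverse structure $[\tau^G_X,\eta^G_X]$; $T^G$ is a monad and $\kappa^G=\tau^G\cdot G\eta^G$. For an endofunctor $L$ with cia $(A,a)$ for $L$ and $L+V$ iteratable: a recursive program scheme is a natural transformation $e:V\to T^{L+V}$; it is guarded if $e=\tau^{L+V}\cdot(\mathrm{inl}\,T^{L+V})\cdot f$ for some natural $f:V\to LT^{L+V}$; an interpreted solution of $e$ in $(A,a)$ is a $V$-algebra $s:VA\to A$ for which there is an Eilenberg–Moore algebra $\beta:T^{L+V}A\to A$ for $T^{L+V}$ with $\beta\cdot\kappa^{L+V}_A=[a,s]$ and $s=\beta\cdot e_A$. Here $L=MHM$. *)

(* Defs.v *)
Set Implicit Arguments.
Unset Strict Implicit.

Record Category := {
  Ob :> Type;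
  Hom : Ob -> Ob -> Type;
  idm : forall X, Hom X X;
  comp : forall X Y Z, Hom Y Z -> Hom X Y -> Hom X Z;
  comp_idl : forall X Y (f : Hom X Y), comp (idm Y) f = f;
  comp_idr : forall X Y (f : Hom X Y), comp f (idm X) = f;
  comp_assoc : forall X Y Z W (h : Hom Z W) (g : Hom Y Z) (f : Hom X Y),
      comp h (comp g f) = comp (comp h g) f
}.
Arguments Hom {c} X Y.
Arguments idm {c} X.
Arguments comp {c X Y Z} g f.
Notation "g ⊚ f" := (comp g f) (at level 40, left associativity).

Record BinProducts (C : Category) := {
  prodO : C -> C -> C;
  pi1 : forall X Y, Hom (prodO X Y) X;
  pi2 : forall X Y, Hom (prodO X Y) Y;
  pairing : forall Z X Y, Hom Z X -> Hom Z Y -> Hom Z (prodO X Y);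
  pairing_pi1 : forall Z X Y (f : Hom Z X) (g : Hom Z Y), pi1 X Y ⊚ pairing f g = f;
  pairing_pi2 : forall Z X Y (f : Hom Z X) (g : Hom Z Y), pi2 X Y ⊚ pairing f g = g;
  pairing_uniq : forall Z X Y (f : Hom Z X) (g : Hom Z Y) (h : Hom Z (prodO X Y)),
      pi1 X Y ⊚ h = f -> pi2 X Y ⊚ h = g -> h = pairing f g
}.
Arguments prodO {C} _ X Y.
Arguments pi1 {C} _ X Y.
Arguments pi2 {C} _ X Y.
Arguments pairing {C} _ {Z X Y} f g.

Record BinCoproducts (C : Category) := {
  coprO : C -> C -> C;
  inl_ : forall X Y, Hom X (coprO X Y);
  inr_ : forall X Y, Hom Y (coprO X Y);
  copair : forall X Y Z, Hom X Z -> Hom Y Z -> Hom (coprO X Y) Z;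
  copair_inl : forall X Y Z (f : Hom X Z) (g : Hom Y Z), copair f g ⊚ inl_ X Y = f;
  copair_inr : forall X Y Z (f : Hom X Z) (g : Hom Y Z), copair f g ⊚ inr_ X Y = g;
  copair_uniq : forall X Y Z (f : Hom X Z) (g : Hom Y Z) (h : Hom (coprO X Y) Z),
      h ⊚ inl_ X Y = f -> h ⊚ inr_ X Y = g -> h = copair f g
}.
Arguments coprO {C} _ X Y.
Arguments inl_ {C} _ X Y.
Arguments inr_ {C} _ X Y.
Arguments copair {C} _ {X Y Z} f g.

(* An object map together with a morphism map (no laws): used for the
   composite functors built below, whose morphism maps are the canonical ones. *)
Record PreFunctor (C : Category) := {
  pobj :> C -> C;
  pmap : forall X Y, Hom X Y -> Hom (pobj X) (pobj Y)
}.
Arguments pobj {C} _ X.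
Arguments pmap {C} _ {X Y} f.

Record Functor (C : Category) := {
  fpre :> PreFunctor C;
  fmap_id : forall X, pmap fpre (idm X) = idm (fpre X);
  fmap_comp : forall X Y Z (g : Hom Y Z) (f : Hom X Y),
      pmap fpre (g ⊚ f) = pmap fpre g ⊚ pmap fpre f
}.

Section Constructions.
Context {C : Category} (P : BinProducts C) (S : BinCoproducts C).

Definition prod_mor {X Y X' Y'} (f : Hom X X') (g : Hom Y Y')
  : Hom (prodO P X Y) (prodO P X' Y') :=
  pairing P (f ⊚ pi1 P X Y) (g ⊚ pi2 P X Y).

Definition sum_mor {X Y X' Y'} (f : Hom X X') (g : Hom Y Y')
  : Hom (coprO S X Y) (coprO S X' Y') :=
  copair S (inl_ S X' Y' ⊚ f) (inr_ S X' Y' ⊚ g).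

Definition compF (F G : PreFunctor C) : PreFunctor C :=
  {| pobj := fun X => F (G X); pmap := fun X Y f => pmap F (pmap G f) |}.

Definition prodIdF (H : PreFunctor C) : PreFunctor C :=
  {| pobj := fun X => prodO P (H X) X;
     pmap := fun X Y f => prod_mor (pmap H f) f |}.

Definition sumF (F G : PreFunctor C) : PreFunctor C :=
  {| pobj := fun X => coprO S (F X) (G X);
     pmap := fun X Y f => sum_mor (pmap F f) (pmap G f) |}.

Record TerminalCoalgebra (H : PreFunctor C) := {
  tc_obj : C;
  tc_str : Hom tc_obj (H tc_obj);
  tc_unfold : forall A, Hom A (H A) -> Hom A tc_obj;
  tc_unfold_spec : forall A (a : Hom A (H A)),
      tc_str ⊚ tc_unfold a = pmap H (tc_unfold a) ⊚ a;
  tc_unfold_uniq : forall A (a : Hom A (H A)) (h : Hom A tc_obj),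
      tc_str ⊚ h = pmap H h ⊚ a -> h = tc_unfold a
}.

Record FreeAlgebras (K : PreFunctor C) := {
  Mo : C -> C;
  phi : forall X, Hom (K (Mo X)) (Mo X);
  eta : forall X, Hom X (Mo X);
  fext : forall X A, Hom (K A) A -> Hom X A -> Hom (Mo X) A;
  fext_hom : forall X A (a : Hom (K A) A) (f : Hom X A),
      fext a f ⊚ phi X = a ⊚ pmap K (fext a f);
  fext_eta : forall X A (a : Hom (K A) A) (f : Hom X A), fext a f ⊚ eta X = f;
  fext_uniq : forall X A (a : Hom (K A) A) (f : Hom X A) (h : Hom (Mo X) A),
      h ⊚ phi X = a ⊚ pmap K h -> h ⊚ eta X = f -> h = fext a f
}.
Arguments Mo {K} _ X.
Arguments phi {K} _ X.
Arguments eta {K} _ X.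
Arguments fext {K} _ {X A} a f.

Definition MF {K : PreFunctor C} (FA : FreeAlgebras K) : PreFunctor C :=
  {| pobj := Mo FA;
     pmap := fun X Y f => fext FA (phi FA Y) (eta FA Y ⊚ f) |}.

Definition sharp {K : PreFunctor C} (FA : FreeAlgebras K) {A} (a : Hom (K A) A)
  : Hom (Mo FA A) A := fext FA a (idm A).

Definition is_GSOS_rule {K H : PreFunctor C} (FA : FreeAlgebras K)
  (ell : forall X, Hom (K (prodO P (H X) X)) (H (Mo FA X))) : Prop :=
  forall X Y (f : Hom X Y),
    ell Y ⊚ pmap K (prod_mor (pmap H f) f) = pmap H (pmap (MF FA) f) ⊚ ell X.

Definition is_ell_interpretation {K H : PreFunctor C} (FA : FreeAlgebras K)
  (Tc : TerminalCoalgebra H)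
  (ell : forall X, Hom (K (prodO P (H X) X)) (H (Mo FA X)))
  (b : Hom (K (tc_obj Tc)) (tc_obj Tc)) : Prop :=
  let eqn := fun b' : Hom (K (tc_obj Tc)) (tc_obj Tc) =>
     tc_str Tc ⊚ b' = pmap H (sharp FA b') ⊚ ell (tc_obj Tc)
                      ⊚ pmap K (pairing P (tc_str Tc) (idm (tc_obj Tc))) in
  eqn b /\ forall b', eqn b' -> b' = b.

Definition is_cia (G : PreFunctor C) (A : C) (a : Hom (G A) A) : Prop :=
  forall X (e : Hom X (coprO S (G X) A)),
    exists edag : Hom X A,
      edag = copair S a (idm A) ⊚ sum_mor (pmap G edag) (idm A) ⊚ e /\
      forall h : Hom X A,
        h = copair S a (idm A) ⊚ sum_mor (pmap G h) (idm A) ⊚ e -> h = edag.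

Record Iteratable (G : PreFunctor C) := {
  TG : C -> C;
  tout : forall X, Hom (TG X) (coprO S (G (TG X)) X);
  tunfold : forall X A, Hom A (coprO S (G A) X) -> Hom A (TG X);
  tunfold_spec : forall X A (al : Hom A (coprO S (G A) X)),
      tout X ⊚ tunfold al = sum_mor (pmap G (tunfold al)) (idm X) ⊚ al;
  tunfold_uniq : forall X A (al : Hom A (coprO S (G A) X)) (h : Hom A (TG X)),
      tout X ⊚ h = sum_mor (pmap G h) (idm X) ⊚ al -> h = tunfold al;
  tinv : forall X, Hom (coprO S (G (TG X)) X) (TG X);
  tinv_l : forall X, tinv X ⊚ tout X = idm (TG X);
  tinv_r : forall X, tout X ⊚ tinv X = idm (coprO S (G (TG X)) X)
}.
Arguments TG {G} _ X.
Arguments tout {G} _ X.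
Arguments tunfold {G} _ {X A} al.
Arguments tinv {G} _ X.

Section Iter.
Context {G : PreFunctor C} (It : Iteratable G).

Definition tau X : Hom (G (TG It X)) (TG It X) := tinv It X ⊚ inl_ S _ _.
Definition teta X : Hom X (TG It X) := tinv It X ⊚ inr_ S _ _.

Definition Tmap {X Y} (f : Hom X Y) : Hom (TG It X) (TG It Y) :=
  tunfold It (sum_mor (idm _) f ⊚ tout It X).

(* multiplication mu_X : T T X -> T X, obtained by unfolding the coalgebra
   T T X + T X -> G(T T X + T X) + X *)
Definition mu X : Hom (TG It (TG It X)) (TG It X) :=
  let Z := coprO S (TG It (TG It X)) (TG It X) in
  let z2 : Hom (TG It X) (coprO S (G Z) X) :=
      sum_mor (pmap G (inr_ S _ _)) (idm X) ⊚ tout It X in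
  let z1 : Hom (TG It (TG It X)) (coprO S (G Z) X) :=
      copair S (inl_ S (G Z) X ⊚ pmap G (inl_ S _ _)) z2 ⊚ tout It (TG It X) in
  tunfold It (copair S z1 z2) ⊚ inl_ S _ _.

Definition kappa X : Hom (G X) (TG It X) := tau X ⊚ pmap G (teta X).

Definition is_EM_algebra A (beta : Hom (TG It A) A) : Prop :=
  beta ⊚ teta A = idm A /\ beta ⊚ mu A = beta ⊚ Tmap beta.
End Iter.

Section RPS.
Context (L V : PreFunctor C) (It : Iteratable (sumF L V)).

Definition is_RPS (e : forall X, Hom (V X) (TG It X)) : Prop :=
  forall X Y (f : Hom X Y), Tmap It f ⊚ e X = e Y ⊚ pmap V f.

Definition is_guarded (e : forall X, Hom (V X) (TG It X)) : Prop :=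
  exists f : forall X, Hom (V X) (L (TG It X)),
    (forall X Y (g : Hom X Y), pmap L (Tmap It g) ⊚ f X = f Y ⊚ pmap V g) /\
    (forall X, e X = tau It X ⊚ inl_ S (L (TG It X)) (V (TG It X)) ⊚ f X).

Definition is_interpreted_solution (e : forall X, Hom (V X) (TG It X))
  (A : C) (a : Hom (L A) A) (s : Hom (V A) A) : Prop :=
  exists beta : Hom (TG It A) A,
    is_EM_algebra (It:=It) beta /\
    beta ⊚ kappa It A = copair S a s /\
    s = beta ⊚ e A.
End RPS.

End Constructions.

(* Main.v *)
Require Import Defs.
From Corelib Require Import ssreflect.


Fact key_sm : unit. Proof. exact tt. Qed.
Definition smO {C : Category} (S : BinCoproducts C) {X Y X' Y' : C} (f : Hom X X') (g : Hom Y Y')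
  : Hom (coprO S X Y) (coprO S X' Y') := match key_sm with tt => sum_mor S f g end.
Lemma smO_eq {C : Category} (S : BinCoproducts C) {X Y X' Y' : C} (f : Hom X X') (g : Hom Y Y') :
  sum_mor S f g = smO S f g.
Proof. rewrite /smO. destruct key_sm. reflexivity. Qed.

Section Gen.
Context {C : Category}.

Lemma ca {X Y Z W : C} (h : Hom Z W) (g : Hom Y Z) (f : Hom X Y) :
  (h ⊚ g) ⊚ f = h ⊚ (g ⊚ f).
Proof. symmetry; apply comp_assoc. Qed.
Lemma cidl {X Y : C} (f : Hom X Y) : idm Y ⊚ f = f. Proof. apply comp_idl. Qed.
Lemma cidr {X Y : C} (f : Hom X Y) : f ⊚ idm X = f. Proof. apply comp_idr. Qed.

Lemma tail {X Y Z W : C} (g : Hom Y Z) (f : Hom X Y) (g' : Hom X Z) (k : Hom W X) :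
  g ⊚ f = g' -> g ⊚ (f ⊚ k) = g' ⊚ k.
Proof. intros <-; apply comp_assoc. Qed.

Lemma pfmap_comp (F : Functor C) {X Y Z : C} (g : Hom Y Z) (f : Hom X Y) :
  pmap F g ⊚ pmap F f = pmap F (g ⊚ f).
Proof. symmetry; apply fmap_comp. Qed.
Lemma pfmap_comp' (F : Functor C) {X Y Z W : C} (g : Hom Y Z) (f : Hom X Y) (k : Hom W (F X)) :
  pmap F g ⊚ (pmap F f ⊚ k) = pmap F (g ⊚ f) ⊚ k.
Proof. apply tail, pfmap_comp. Qed.
Lemma pfmap_id (F : Functor C) (X : C) : pmap F (idm X) = idm (F X).
Proof. apply fmap_id. Qed.

Variable S : BinCoproducts C.

Lemma cpl {X Y Z : C} (f : Hom X Z) (g : Hom Y Z) : copair S f g ⊚ inl_ S X Y = f.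
Proof. apply copair_inl. Qed.
Lemma cpr {X Y Z : C} (f : Hom X Z) (g : Hom Y Z) : copair S f g ⊚ inr_ S X Y = g.
Proof. apply copair_inr. Qed.
Lemma cpl' {X Y Z W : C} (f : Hom X Z) (g : Hom Y Z) (k : Hom W X) :
  copair S f g ⊚ (inl_ S X Y ⊚ k) = f ⊚ k.
Proof. apply tail, cpl. Qed.
Lemma cpr' {X Y Z W : C} (f : Hom X Z) (g : Hom Y Z) (k : Hom W Y) :
  copair S f g ⊚ (inr_ S X Y ⊚ k) = g ⊚ k.
Proof. apply tail, cpr. Qed.

Lemma cp_ext {X Y Z : C} (f g : Hom (coprO S X Y) Z) :
  f ⊚ inl_ S X Y = g ⊚ inl_ S X Y -> f ⊚ inr_ S X Y = g ⊚ inr_ S X Y -> f = g.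
Proof.
  intros H1 H2. rewrite (@copair_uniq _ S _ _ _ (f ⊚ inl_ S X Y) (f ⊚ inr_ S X Y) f) //.
  symmetry. apply copair_uniq; auto.
Qed.

Lemma cp_comp {X Y Z W : C} (h : Hom Z W) (f : Hom X Z) (g : Hom Y Z) :
  h ⊚ copair S f g = copair S (h ⊚ f) (h ⊚ g).
Proof. apply copair_uniq; rewrite ca; [rewrite cpl|rewrite cpr]; auto. Qed.

Lemma cp_id {X Y : C} : copair S (inl_ S X Y) (inr_ S X Y) = idm _.
Proof. symmetry; apply copair_uniq; apply cidl. Qed.

Lemma sml {X Y X' Y' : C} (u : Hom X X') (v : Hom Y Y') :
  smO S u v ⊚ inl_ S X Y = inl_ S X' Y' ⊚ u.
Proof. rewrite -smO_eq; unfold sum_mor; apply cpl. Qed.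
Lemma smr {X Y X' Y' : C} (u : Hom X X') (v : Hom Y Y') :
  smO S u v ⊚ inr_ S X Y = inr_ S X' Y' ⊚ v.
Proof. rewrite -smO_eq; unfold sum_mor; apply cpr. Qed.
Lemma sml' {X Y X' Y' W : C} (u : Hom X X') (v : Hom Y Y') (k : Hom W X) :
  smO S u v ⊚ (inl_ S X Y ⊚ k) = inl_ S X' Y' ⊚ (u ⊚ k).
Proof. rewrite comp_assoc sml; apply ca. Qed.
Lemma smr' {X Y X' Y' W : C} (u : Hom X X') (v : Hom Y Y') (k : Hom W Y) :
  smO S u v ⊚ (inr_ S X Y ⊚ k) = inr_ S X' Y' ⊚ (v ⊚ k).
Proof. rewrite comp_assoc smr; apply ca. Qed.

Lemma cp_sm {X Y X' Y' Z : C} (f : Hom X' Z) (g : Hom Y' Z) (u : Hom X X') (v : Hom Y Y') :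
  copair S f g ⊚ smO S u v = copair S (f ⊚ u) (g ⊚ v).
Proof. rewrite -smO_eq; unfold sum_mor. rewrite cp_comp !comp_assoc cpl cpr; auto. Qed.
Lemma cp_sm' {X Y X' Y' Z W : C} (f : Hom X' Z) (g : Hom Y' Z) (u : Hom X X') (v : Hom Y Y')
  (k : Hom W _) :
  copair S f g ⊚ (smO S u v ⊚ k) = copair S (f ⊚ u) (g ⊚ v) ⊚ k.
Proof. apply tail, cp_sm. Qed.

Lemma sm_id {X Y : C} : smO S (idm X) (idm Y) = idm _.
Proof. rewrite -smO_eq; unfold sum_mor; rewrite !cidr; apply cp_id. Qed.

Lemma sm_sm {X Y X' Y' X'' Y'' : C} (u : Hom X' X'') (v : Hom Y' Y'') (u' : Hom X X') (v' : Hom Y Y') :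
  smO S u v ⊚ smO S u' v' = smO S (u ⊚ u') (v ⊚ v').
Proof. rewrite -[smO S u v]smO_eq; unfold sum_mor. rewrite cp_sm !ca -smO_eq. reflexivity. Qed.
Lemma sm_sm' {X Y X' Y' X'' Y'' W : C} (u : Hom X' X'') (v : Hom Y' Y'') (u' : Hom X X') (v' : Hom Y Y') (k : Hom W _) :
  smO S u v ⊚ (smO S u' v' ⊚ k) = smO S (u ⊚ u') (v ⊚ v') ⊚ k.
Proof. apply tail, sm_sm. Qed.

Lemma cp_comp' {X Y Z W V : C} (h : Hom Z W) (f : Hom X Z) (g : Hom Y Z) (k : Hom V _) :
  h ⊚ (copair S f g ⊚ k) = copair S (h ⊚ f) (h ⊚ g) ⊚ k.
Proof. apply tail, cp_comp. Qed.
End Gen.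


Fact key_tau : unit. Proof. exact tt. Qed.
Fact key_teta : unit. Proof. exact tt. Qed.
Fact key_mu : unit. Proof. exact tt. Qed.
Fact key_kappa : unit. Proof. exact tt. Qed.
Fact key_G : unit. Proof. exact tt. Qed.
Definition tauL {C : Category} {S : BinCoproducts C} {G : PreFunctor C} (It : Iteratable S G) X
  : Hom (G (TG It X)) (TG It X) := match key_tau with tt => tau It X end.
Definition tetaL {C : Category} {S : BinCoproducts C} {G : PreFunctor C} (It : Iteratable S G) X
  : Hom X (TG It X) := match key_teta with tt => teta It X end.
Definition muL {C : Category} {S : BinCoproducts C} {G : PreFunctor C} (It : Iteratable S G) X
  : Hom (TG It (TG It X)) (TG It X) := match key_mu with tt => mu It X end.
Definition kappaL {C : Category} {S : BinCoproducts C} {G : PreFunctor C} (It : Iteratable S G) X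
  : Hom (G X) (TG It X) := match key_kappa with tt => kappa It X end.
Section Seals.
Context {C : Category} {S : BinCoproducts C} {G : PreFunctor C} {It : Iteratable S G}.
Lemma tauL_eq X : tau It X = tauL It X. Proof. rewrite /tauL. destruct key_tau. reflexivity. Qed.
Lemma tetaL_eq X : teta It X = tetaL It X. Proof. rewrite /tetaL. destruct key_teta. reflexivity. Qed.
Lemma muL_eq X : mu It X = muL It X. Proof. rewrite /muL. destruct key_mu. reflexivity. Qed.
Lemma kappaL_eq X : kappa It X = kappaL It X. Proof. rewrite /kappaL. destruct key_kappa. reflexivity. Qed.
Lemma tau_def X : tauL It X = tinv It X ⊚ inl_ S _ _. Proof. rewrite -tauL_eq. reflexivity. Qed.
Lemma teta_def X : tetaL It X = tinv It X ⊚ inr_ S _ _. Proof. rewrite -tetaL_eq. reflexivity. Qed.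
Lemma kappa_def X : kappaL It X = tauL It X ⊚ pmap G (tetaL It X).
Proof. rewrite -kappaL_eq -tauL_eq -tetaL_eq. reflexivity. Qed.
Definition Gm {X Y : C} (f : Hom X Y) : Hom (G X) (G Y) := match key_G with tt => pmap G f end.
Lemma Gm_eq {X Y : C} (f : Hom X Y) : pmap G f = Gm f. Proof. rewrite /Gm. destruct key_G. reflexivity. Qed.
Lemma Tmap_def X Y (f : Hom X Y) :
  Tmap It f = tunfold It (smO S (idm _) f ⊚ tout It X). Proof. rewrite -smO_eq. reflexivity. Qed.
Lemma tunfold_spec' X A (al : Hom A (coprO S (G A) X)) :
  tout It X ⊚ tunfold It al = smO S (Gm (tunfold It al)) (idm X) ⊚ al.
Proof. rewrite -Gm_eq -smO_eq. apply tunfold_spec. Qed.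
Lemma tunfold_uniq' X A (al : Hom A (coprO S (G A) X)) (h : Hom A (TG It X)) :
  tout It X ⊚ h = smO S (Gm h) (idm X) ⊚ al -> h = tunfold It al.
Proof. rewrite -Gm_eq -smO_eq. apply tunfold_uniq. Qed.
Lemma kappa_def' X : kappaL It X = tauL It X ⊚ Gm (tetaL It X).
Proof. rewrite kappa_def Gm_eq. reflexivity. Qed.
Lemma mu_def X :
  muL It X = let Z := coprO S (TG It (TG It X)) (TG It X) in
  let z2 : Hom (TG It X) (coprO S (G Z) X) :=
      smO S (Gm (inr_ S _ _)) (idm X) ⊚ tout It X in
  let z1 : Hom (TG It (TG It X)) (coprO S (G Z) X) :=
      copair S (inl_ S (G Z) X ⊚ Gm (inl_ S _ _)) z2 ⊚ tout It (TG It X) in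
  tunfold It (copair S z1 z2) ⊚ inl_ S _ _. Proof. rewrite -muL_eq -!Gm_eq -!smO_eq. reflexivity. Qed.
End Seals.
Arguments tunfold_uniq' {C S G It X A al h} _.
Ltac nrm0 := rewrite ?ca ?cidl ?cidr ?cpl ?cpr ?cpl' ?cpr' ?sml ?smr ?sml' ?smr' ?cp_sm ?cp_sm' ?sm_sm ?sm_sm' ?sm_id.

Lemma Gm_comp {C : Category} {S : BinCoproducts C} {G : Functor C} {X Y Z : C} (g : Hom Y Z) (f : Hom X Y) :
  Gm (G:=G) g ⊚ Gm f = Gm (g ⊚ f).
Proof. rewrite -!Gm_eq fmap_comp. reflexivity. Qed.

Section T.
Context {C : Category} (S : BinCoproducts C) (L V : PreFunctor C).
Hypothesis Lid : forall X, pmap L (idm X) = idm (L X).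
Hypothesis Lc : forall X Y Z (g : Hom Y Z) (f : Hom X Y), pmap L (g ⊚ f) = pmap L g ⊚ pmap L f.
Hypothesis Vid : forall X, pmap V (idm X) = idm (V X).
Hypothesis Vc : forall X Y Z (g : Hom Y Z) (f : Hom X Y), pmap V (g ⊚ f) = pmap V g ⊚ pmap V f.

Notation G := (sumF S L V).
Lemma Gm_def {X Y} (f : Hom X Y) : Gm (G:=G) f = smO S (pmap L f) (pmap V f).
Proof. rewrite -Gm_eq -smO_eq. reflexivity. Qed.
Lemma Gid X : Gm (G:=G) (idm X) = idm (G X).
Proof. rewrite Gm_def Lid Vid. apply sm_id. Qed.
Lemma Gc {X Y Z} (g : Hom Y Z) (f : Hom X Y) : Gm (G:=G) g ⊚ Gm f = Gm (g ⊚ f).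
Proof. rewrite !Gm_def Lc Vc sm_sm. reflexivity. Qed.
Lemma Gc' {X Y Z W} (g : Hom Y Z) (f : Hom X Y) (k : Hom W _) : Gm (G:=G) g ⊚ (Gm f ⊚ k) = Gm (g ⊚ f) ⊚ k.
Proof. apply tail, Gc. Qed.
Lemma Lc' {X Y Z} (g : Hom Y Z) (f : Hom X Y) : pmap L g ⊚ pmap L f = pmap L (g ⊚ f). Proof. rewrite Lc. reflexivity. Qed.
Lemma Lc'' {X Y Z W} (g : Hom Y Z) (f : Hom X Y) (k : Hom W _) : pmap L g ⊚ (pmap L f ⊚ k) = pmap L (g ⊚ f) ⊚ k. Proof. apply tail, Lc'. Qed.
Lemma Vc' {X Y Z} (g : Hom Y Z) (f : Hom X Y) : pmap V g ⊚ pmap V f = pmap V (g ⊚ f). Proof. rewrite Vc. reflexivity. Qed.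
Lemma Vc'' {X Y Z W} (g : Hom Y Z) (f : Hom X Y) (k : Hom W _) : pmap V g ⊚ (pmap V f ⊚ k) = pmap V (g ⊚ f) ⊚ k. Proof. apply tail, Vc'. Qed.

Variable It : Iteratable S G.
Notation T := (TG It).
Notation tout := (tout It).
Notation tinv := (tinv It).
Notation tau := (tauL It).
Notation teta := (tetaL It).
Notation Tm := (Tmap It).
Notation mu := (muL It).
Notation Gm := (Gm (G:=G)).
Notation inl := (inl_ S _ _).
Notation inr := (inr_ S _ _).

Lemma toi X : tout X ⊚ tinv X = idm _. Proof. apply tinv_r. Qed.
Lemma tio X : tinv X ⊚ tout X = idm _. Proof. apply tinv_l. Qed.
Lemma toi' X W (k : Hom W _) : tout X ⊚ (tinv X ⊚ k) = k.
Proof. rewrite comp_assoc toi; apply cidl. Qed.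
Lemma tio' X W (k : Hom W _) : tinv X ⊚ (tout X ⊚ k) = k.
Proof. rewrite comp_assoc tio; apply cidl. Qed.
Lemma tout_tau X : tout X ⊚ tau X = inl. Proof. rewrite tau_def comp_assoc toi; apply cidl. Qed.
Lemma tout_teta X : tout X ⊚ teta X = inr. Proof. rewrite teta_def comp_assoc toi; apply cidl. Qed.
Lemma tout_tau' X W (k : Hom W _) : tout X ⊚ (tau X ⊚ k) = inl ⊚ k. Proof. apply tail, tout_tau. Qed.
Lemma tout_teta' X W (k : Hom W _) : tout X ⊚ (teta X ⊚ k) = inr ⊚ k. Proof. apply tail, tout_teta. Qed.
Lemma tinv_cp X : tinv X = copair S (tau X) (teta X).
Proof. rewrite tau_def teta_def. apply copair_uniq; reflexivity. Qed.

Ltac nrm := repeat progress (nrm0; rewrite ?toi ?tio ?toi' ?tio' ?tout_tau ?tout_teta ?tout_tau' ?tout_teta' ?Gc ?Gc' ?Gid ?Lc' ?Lc'' ?Vc' ?Vc'' ?Lid ?Vid).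
Ltac cpc := rewrite ?cp_comp ?cp_comp'.

Lemma tu_eq X A (al : Hom A (coprO S (G A) X)) (h1 h2 : Hom A (T X)) :
  tout X ⊚ h1 = smO S (Gm h1) (idm X) ⊚ al ->
  tout X ⊚ h2 = smO S (Gm h2) (idm X) ⊚ al -> h1 = h2.
Proof. intros E1 E2. rewrite (tunfold_uniq' E1) (tunfold_uniq' E2). reflexivity. Qed.

Lemma tunfold_tout X : tunfold It (tout X) = idm _.
Proof. symmetry. apply tunfold_uniq'. nrm. reflexivity. Qed.

Lemma tout_inj X W (h1 h2 : Hom W (T X)) : tout X ⊚ h1 = tout X ⊚ h2 -> h1 = h2.
Proof. intros E. rewrite -(tio' X _ h1) E. apply tio'. Qed.

Definition tsol {X Y} (e : Hom Y (coprO S (G Y) (T X))) (h : Hom Y (T X)) : Prop :=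
  h = copair S (tau X) (idm _) ⊚ smO S (Gm h) (idm _) ⊚ e.

Lemma tsol_tout {X Y} (e : Hom Y (coprO S (G Y) (T X))) (h : Hom Y (T X)) :
  tsol e h <-> tout X ⊚ h = copair S (inl ⊚ Gm h) (tout X) ⊚ e.
Proof.
  unfold tsol; split; intro E.
  - rewrite {1}E. nrm. cpc. nrm. reflexivity.
  - apply tout_inj. rewrite E. nrm. cpc. nrm. reflexivity.
Qed.

Lemma tsol_uniq {X Y} (e : Hom Y (coprO S (G Y) (T X))) (h1 h2 : Hom Y (T X)) :
  tsol e h1 -> tsol e h2 -> h1 = h2.
Proof.
  intros E1 E2. apply tsol_tout in E1. apply tsol_tout in E2.
  set (z2 := smO S (Gm (inr_ S Y (T X))) (idm X) ⊚ tout X).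
  set (c := copair S (copair S (inl ⊚ Gm (inl_ S Y (T X))) z2 ⊚ e) z2).
  assert (K : forall h, tout X ⊚ h = copair S (inl ⊚ Gm h) (tout X) ⊚ e ->
     tout X ⊚ copair S h (idm _) = smO S (Gm (copair S h (idm _))) (idm X) ⊚ c).
  { intros h Eh. apply cp_ext; unfold c, z2; nrm.
    - rewrite Eh. cpc. nrm. reflexivity.
    - reflexivity. }
  pose proof (tu_eq _ _ _ _ _ (K _ E1) (K _ E2)) as Q.
  rewrite -(cpl S h1 (idm _)) Q. apply cpl.
Qed.

Lemma mu_tout X : tout X ⊚ mu X = copair S (inl ⊚ Gm (mu X)) (tout X) ⊚ tout (T X).
Proof.
  rewrite mu_def /=. set (U := tunfold It _).
  assert (HU : U ⊚ inr = idm _).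
  { apply (tu_eq _ _ (tout X)).
    - unfold U. rewrite comp_assoc tunfold_spec'. nrm. reflexivity.
    - nrm. reflexivity. }
  rewrite comp_assoc. unfold U at 1. rewrite tunfold_spec'. fold U.
  nrm. cpc. nrm. rewrite HU. nrm.
  reflexivity.
Qed.

Lemma mu_tsol X : tsol (tout (T X)) (mu X).
Proof. apply tsol_tout, mu_tout. Qed.

Lemma mu_tinv X : mu X ⊚ tinv (T X) = copair S (tau X ⊚ Gm (mu X)) (idm _).
Proof.
  pose proof (mu_tsol X) as E. unfold tsol in E.
  rewrite {1}E. nrm. reflexivity.
Qed.
Lemma mu_tau X : mu X ⊚ tau (T X) = tau X ⊚ Gm (mu X).
Proof. rewrite {1}tau_def comp_assoc mu_tinv. apply cpl. Qed.
Lemma mu_teta X : mu X ⊚ teta (T X) = idm _.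
Proof. rewrite {1}teta_def comp_assoc mu_tinv. apply cpr. Qed.

Lemma Tm_tout {X Y} (f : Hom X Y) : tout Y ⊚ Tm f = smO S (Gm (Tm f)) f ⊚ tout X.
Proof. rewrite Tmap_def tunfold_spec'. nrm. reflexivity. Qed.
Lemma Tm_id X : Tm (idm X) = idm _.
Proof. rewrite Tmap_def sm_id cidl. apply tunfold_tout. Qed.
Lemma Tm_comp {X Y Z} (g : Hom Y Z) (f : Hom X Y) : Tm g ⊚ Tm f = Tm (g ⊚ f).
Proof.
  apply (tu_eq _ _ (smO S (idm _) (g ⊚ f) ⊚ tout X)).
  - rewrite comp_assoc Tm_tout ca Tm_tout. nrm. reflexivity.
  - rewrite Tm_tout. nrm. reflexivity.
Qed.
Lemma Tm_tinv {X Y} (f : Hom X Y) : Tm f ⊚ tinv X = tinv Y ⊚ smO S (Gm (Tm f)) f.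
Proof. apply tout_inj. rewrite comp_assoc Tm_tout. nrm. reflexivity. Qed.
Lemma Tm_tau {X Y} (f : Hom X Y) : Tm f ⊚ tau X = tau Y ⊚ Gm (Tm f).
Proof. rewrite !tau_def comp_assoc Tm_tinv. nrm. reflexivity. Qed.
Lemma Tm_teta {X Y} (f : Hom X Y) : Tm f ⊚ teta X = teta Y ⊚ f.
Proof. rewrite !teta_def comp_assoc Tm_tinv. nrm. reflexivity. Qed.

Lemma mu_eq X : mu X = copair S (tau X ⊚ Gm (mu X)) (idm _) ⊚ tout (T X).
Proof. rewrite -mu_tinv ca tio. symmetry; apply cidr. Qed.

Lemma mu_nat {X Y} (f : Hom X Y) : mu Y ⊚ Tm (Tm f) = Tm f ⊚ mu X.
Proof.
  apply (tsol_uniq (smO S (idm _) (Tm f) ⊚ tout (T X))); unfold tsol.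
  - rewrite {1}mu_eq !ca Tm_tout. nrm. reflexivity.
  - rewrite {1}mu_eq. nrm. cpc. rewrite comp_assoc Tm_tau.
    nrm. reflexivity.
Qed.

Lemma mu_Tteta X : mu X ⊚ Tm (teta X) = idm _.
Proof.
  apply (tsol_uniq (smO S (idm _) (teta X) ⊚ tout X)); unfold tsol.
  - rewrite {1}mu_eq !ca Tm_tout. nrm. reflexivity.
  - nrm. rewrite -{1}(tio X) tinv_cp. reflexivity.
Qed.

Lemma mu_assoc X : mu X ⊚ Tm (mu X) = mu X ⊚ mu (T X).
Proof.
  apply (tsol_uniq (smO S (idm _) (mu X) ⊚ tout (T (T X)))); unfold tsol.
  - rewrite {1}mu_eq !ca Tm_tout. nrm. reflexivity.
  - apply tout_inj. rewrite comp_assoc mu_tout ca mu_tout. nrm.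
    cpc. nrm. rewrite mu_tout. reflexivity.
Qed.

Ltac nrm2 := repeat progress (nrm; cpc).

Variable A : C.
Variable a : Hom (L A) A.
Hypothesis cia_a : @is_cia C S L A a.
Variable f : forall X, Hom (V X) (L (T X)).
Hypothesis fnat : forall X Y (g : Hom X Y), pmap L (Tmap It g) ⊚ f X = f Y ⊚ pmap V g.

Lemma fnat' {X Y} (g : Hom X Y) : f Y ⊚ pmap V g = pmap L (Tm g) ⊚ f X.
Proof. rewrite fnat. reflexivity. Qed.
Lemma fnat'' {X Y W} (g : Hom X Y) (k : Hom W _) : f Y ⊚ (pmap V g ⊚ k) = pmap L (Tm g) ⊚ (f X ⊚ k).
Proof. rewrite comp_assoc fnat' ca. reflexivity. Qed.

Definition lsol {X} (E : Hom X (coprO S (L X) A)) (h : Hom X A) : Prop :=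
  h = copair S a (idm A) ⊚ smO S (pmap L h) (idm A) ⊚ E.
Lemma lsol_ex {X} (E : Hom X (coprO S (L X) A)) : exists h, lsol E h.
Proof. destruct (cia_a _ E) as [h [H1 _]]. exists h. unfold lsol. rewrite -smO_eq. exact H1. Qed.
Lemma lsol_uniq {X} (E : Hom X (coprO S (L X) A)) h1 h2 : lsol E h1 -> lsol E h2 -> h1 = h2.
Proof.
  destruct (cia_a _ E) as [h [_ H2]]. unfold lsol. rewrite -!smO_eq. intros E1 E2.
  rewrite (H2 _ E1) (H2 _ E2). reflexivity.
Qed.

Definition Eh {X} (h : Hom X A) : Hom (T X) (coprO S (L (T X)) A) :=
  copair S (copair S inl (inl ⊚ pmap L (mu X) ⊚ f (T X))) (inr ⊚ h) ⊚ tout X.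

Lemma beta_Th (beta : Hom (T A) A) : lsol (Eh (idm A)) beta ->
  forall X (h : Hom X A), lsol (Eh h) (beta ⊚ Tm h).
Proof.
  intros Hb X h. unfold lsol. rewrite {1}Hb. unfold Eh.
  nrm2. rewrite Tm_tout. nrm2. rewrite Gm_def. nrm2. rewrite fnat'. nrm2.
  rewrite mu_nat. reflexivity.
Qed.

Lemma mu_kappa X : mu X ⊚ kappaL It (T X) = tau X.
Proof. rewrite kappa_def' comp_assoc mu_tau ca Gc mu_teta Gid cidr. reflexivity. Qed.
Lemma kappa_nat {X Y} (g : Hom X Y) : Tm g ⊚ kappaL It X = kappaL It Y ⊚ Gm g.
Proof. rewrite !kappa_def' comp_assoc Tm_tau !ca !Gc Tm_teta. reflexivity. Qed.

Lemma interp_lsol (beta' : Hom (T A) A) (s' : Hom (V A) A) :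
  beta' ⊚ teta A = idm A -> beta' ⊚ mu A = beta' ⊚ Tm beta' ->
  beta' ⊚ kappaL It A = copair S a s' -> s' = beta' ⊚ (tau A ⊚ (inl ⊚ f A)) ->
  lsol (Eh (idm A)) beta'.
Proof.
  intros H1 H2 H3 H4.
  assert (Ht : beta' ⊚ tau A = copair S a s' ⊚ Gm beta').
  { rewrite -mu_kappa comp_assoc H2 ca kappa_nat comp_assoc H3. reflexivity. }
  assert (Hs : s' ⊚ pmap V beta' = a ⊚ (pmap L (beta' ⊚ mu A) ⊚ f (T A))).
  { rewrite {1}H4 !ca (comp_assoc beta') Ht Gm_def. nrm2. rewrite fnat'. nrm2. rewrite H2. reflexivity. }
  unfold lsol. rewrite -{1}(cidr beta') -(tio A) tinv_cp comp_assoc cp_comp Ht H1 Gm_def. unfold Eh.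
  nrm2. rewrite Hs. reflexivity.
Qed.

Variable beta : Hom (T A) A.
Hypothesis Hb : lsol (Eh (idm A)) beta.
Definition sb : Hom (V A) A := beta ⊚ (tau A ⊚ (inl_ S (L (T A)) (V (T A)) ⊚ f A)).

Lemma beta_tau : beta ⊚ tau A = copair S (a ⊚ pmap L beta) (a ⊚ (pmap L (beta ⊚ mu A) ⊚ f (T A))).
Proof. rewrite {1}Hb. unfold Eh. nrm2. reflexivity. Qed.
Lemma beta_teta : beta ⊚ teta A = idm A.
Proof. rewrite {1}Hb. unfold Eh. nrm2. reflexivity. Qed.
Lemma sb_eq : sb = a ⊚ (pmap L beta ⊚ f A).
Proof. unfold sb. rewrite comp_assoc beta_tau. nrm2. reflexivity. Qed.

Definition gsol {X} (ee : Hom X (coprO S (G X) A)) (h : Hom X A) : Prop :=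
  h = copair S (copair S a sb) (idm A) ⊚ smO S (Gm h) (idm A) ⊚ ee.

Lemma gsol_sb {X} (ee : Hom X (coprO S (G X) A)) (h : Hom X A) :
  gsol ee h <-> h = copair S (copair S (a ⊚ pmap L h) (a ⊚ (pmap L (beta ⊚ Tm h) ⊚ f X))) (idm A) ⊚ ee.
Proof.
  unfold gsol. rewrite Gm_def sb_eq. nrm2. rewrite fnat'. nrm2. split; auto.
Qed.

Lemma G_cia_ex {X} (ee : Hom X (coprO S (G X) A)) :
  exists h, gsol ee h /\ forall h', gsol ee h' -> h' = h.
Proof.
  set (W1 := copair S (copair S (inl ⊚ pmap L (inl_ S X (T X))) (inl ⊚ (pmap L (inr_ S X (T X)) ⊚ f X))) inr ⊚ ee).
  set (W2 := copair S (copair S (inl ⊚ pmap L (inr_ S X (T X))) (inl ⊚ (pmap L (inr_ S X (T X) ⊚ mu X) ⊚ f (T X)))) W1 ⊚ tout X).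
  destruct (lsol_ex (copair S W1 W2)) as [g Hg].
  assert (Hl : forall g', lsol (copair S W1 W2) g' ->
    g' ⊚ inl = copair S (copair S (a ⊚ pmap L (g' ⊚ inl)) (a ⊚ (pmap L (g' ⊚ inr) ⊚ f X))) (idm A) ⊚ ee).
  { intros g' Hg'. rewrite {1}Hg'. unfold W1. nrm2. reflexivity. }
  assert (Hr : forall g', lsol (copair S W1 W2) g' -> lsol (Eh (g' ⊚ inl)) (g' ⊚ inr)).
  { intros g' Hg'. unfold lsol. rewrite {1}Hg'. rewrite (Hl g' Hg'). unfold W2, Eh. nrm2.
    rewrite (Hl g' Hg'). reflexivity. }
  assert (Hk : forall g', lsol (copair S W1 W2) g' -> g' ⊚ inr = beta ⊚ Tm (g' ⊚ inl)).
  { intros g' Hg'. apply (lsol_uniq _ _ _ (Hr g' Hg')). apply beta_Th; auto. }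
  exists (g ⊚ inl). split.
  - apply gsol_sb. rewrite {1}(Hl g Hg) (Hk g Hg). reflexivity.
  - intros h' Hh'. apply gsol_sb in Hh'.
    assert (Hg' : lsol (copair S W1 W2) (copair S h' (beta ⊚ Tm h'))).
    { apply cp_ext.
      - unfold W1. nrm2. exact Hh'.
      - unfold W2. nrm2. rewrite -Hh'. pose proof (beta_Th beta Hb _ h') as Q. unfold lsol, Eh in Q.
        rewrite {1}Q. nrm2. reflexivity. }
    rewrite -(cpl S h' (beta ⊚ Tm h')) (lsol_uniq _ _ _ Hg' Hg). reflexivity.
Qed.

Lemma beta_mu_expand : beta ⊚ mu A = copair S (beta ⊚ (tau A ⊚ Gm (mu A))) beta ⊚ tout (T A).
Proof.
  rewrite -{1}(tio' A _ (mu A)) mu_tout cp_comp' tio.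
  rewrite (comp_assoc (tinv A)) -tau_def cp_comp' cidr. reflexivity.
Qed.

Lemma beta_EM : beta ⊚ mu A = beta ⊚ Tm beta.
Proof.
  apply (lsol_uniq (Eh beta)).
  - unfold lsol. rewrite {1}beta_mu_expand. rewrite comp_assoc beta_tau. unfold Eh.
    nrm2. rewrite Gm_def. nrm2. rewrite fnat'. nrm2. rewrite mu_assoc. reflexivity.
  - apply beta_Th; auto.
Qed.

Lemma beta_kappa : beta ⊚ kappaL It A = copair S a sb.
Proof.
  rewrite kappa_def' comp_assoc beta_tau Gm_def. nrm2. rewrite beta_teta Lid cidr fnat'. nrm2.
  rewrite mu_Tteta cidr sb_eq. reflexivity.
Qed.

End T.


Theorem rps_main {C : Category} (S : BinCoproducts C) (L V : PreFunctor C)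
  (Lid : forall X, pmap L (idm X) = idm (L X))
  (Lc : forall X Y Z (g : Hom Y Z) (f : Hom X Y), pmap L (g ⊚ f) = pmap L g ⊚ pmap L f)
  (Vid : forall X, pmap V (idm X) = idm (V X))
  (Vc : forall X Y Z (g : Hom Y Z) (f : Hom X Y), pmap V (g ⊚ f) = pmap V g ⊚ pmap V f)
  (It : Iteratable S (sumF S L V)) (A : C) (a : Hom (L A) A) (cia : @is_cia C S L A a)
  (e : forall X, Hom (V X) (TG It X)) (eg : @is_guarded C S L V It e) :
  exists s : Hom (V A) A,
      @is_interpreted_solution C S L V It e A a s /\
      (forall s', @is_interpreted_solution C S L V It e A a s' -> s' = s) /\
      @is_cia C S (sumF S L V) A (copair S a s).
Proof.
  destruct eg as [f [fnat edef]].
  destruct (lsol_ex S L A a cia (Eh S L V It A f (idm A))) as [beta Hb].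
  assert (eA : e A = tauL It A ⊚ (inl_ S _ _ ⊚ f A)). { rewrite edef -tauL_eq ca. reflexivity. }
  exists (sb S L V It A f beta). split; [|split].
  - exists beta. split; [split|split].
    + rewrite tetaL_eq. eapply beta_teta; eauto.
    + rewrite muL_eq. eapply beta_EM; eauto.
    + rewrite kappaL_eq. eapply beta_kappa; eauto.
    + rewrite eA. reflexivity.
  - intros s' [beta' [[H1 H2] [H3 H4]]].
    rewrite tetaL_eq in H1. rewrite muL_eq in H2. rewrite kappaL_eq in H3. rewrite eA in H4.
    pose proof (interp_lsol S L V Lid Lc Vid Vc It A a f fnat beta' s' H1 H2 H3 H4) as Hl.
    rewrite H4 (lsol_uniq S L A a cia _ _ _ Hl Hb). reflexivity.
  - intros X ee. destruct (G_cia_ex S L V Lid Lc Vid Vc It A a cia f fnat beta Hb ee) as [h [Hh Hu]].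
    exists h. unfold gsol in Hh, Hu. rewrite -Gm_eq -smO_eq in Hh. split; [exact Hh|].
    intros h' Hh'. apply Hu. rewrite -Gm_eq -smO_eq. exact Hh'.
Qed.


Fact key_Mm : unit. Proof. exact tt. Qed.
Fact key_shp : unit. Proof. exact tt. Qed.
Fact key_pm : unit. Proof. exact tt. Qed.

Section M.
Context {C : Category} (P : BinProducts C) (S : BinCoproducts C) (K H : Functor C) (FA : FreeAlgebras K).

Definition Mm {X Y : C} (f : Hom X Y) : Hom (Mo FA X) (Mo FA Y) :=
  match key_Mm with tt => pmap (MF FA) f end.
Lemma Mm_eq {X Y : C} (f : Hom X Y) : pmap (MF FA) f = Mm f. Proof. rewrite /Mm. destruct key_Mm. reflexivity. Qed.
Definition shp {A : C} (a : Hom (K A) A) : Hom (Mo FA A) A := match key_shp with tt => sharp FA a end.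
Lemma shp_eq {A : C} (a : Hom (K A) A) : sharp FA a = shp a. Proof. rewrite /shp. destruct key_shp. reflexivity. Qed.
Definition pm {X Y X' Y' : C} (f : Hom X X') (g : Hom Y Y') : Hom (prodO P X Y) (prodO P X' Y') :=
  match key_pm with tt => prod_mor P f g end.
Lemma pm_eq {X Y X' Y' : C} (f : Hom X X') (g : Hom Y Y') : prod_mor P f g = pm f g.
Proof. rewrite /pm. destruct key_pm. reflexivity. Qed.

Notation M := (Mo FA).
Notation eta := (eta FA).
Notation phi := (phi FA).
Notation pa := (pairing P).
Notation p1 := (pi1 P _ _).
Notation p2 := (pi2 P _ _).

Lemma p1p {Z X Y} (f : Hom Z X) (g : Hom Z Y) : pi1 P X Y ⊚ pa f g = f. Proof. apply pairing_pi1. Qed.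
Lemma p2p {Z X Y} (f : Hom Z X) (g : Hom Z Y) : pi2 P X Y ⊚ pa f g = g. Proof. apply pairing_pi2. Qed.
Lemma p1p' {Z X Y W} (f : Hom Z X) (g : Hom Z Y) (k : Hom W Z) : pi1 P X Y ⊚ (pa f g ⊚ k) = f ⊚ k. Proof. apply tail, p1p. Qed.
Lemma p2p' {Z X Y W} (f : Hom Z X) (g : Hom Z Y) (k : Hom W Z) : pi2 P X Y ⊚ (pa f g ⊚ k) = g ⊚ k. Proof. apply tail, p2p. Qed.
Lemma pa_ext {Z X Y} (h h' : Hom Z (prodO P X Y)) : pi1 P X Y ⊚ h = pi1 P X Y ⊚ h' -> pi2 P X Y ⊚ h = pi2 P X Y ⊚ h' -> h = h'.
Proof. intros E1 E2. rewrite (pairing_uniq E1 E2). symmetry. apply pairing_uniq; reflexivity. Qed.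
Lemma pa_comp {Z X Y W} (f : Hom Z X) (g : Hom Z Y) (k : Hom W Z) : pa f g ⊚ k = pa (f ⊚ k) (g ⊚ k).
Proof. apply pairing_uniq; rewrite comp_assoc ?p1p ?p2p; reflexivity. Qed.
Lemma p1pm {X Y X' Y'} (u : Hom X X') (v : Hom Y Y') : pi1 P X' Y' ⊚ pm u v = u ⊚ pi1 P X Y.
Proof. rewrite -pm_eq /prod_mor p1p. reflexivity. Qed.
Lemma p2pm {X Y X' Y'} (u : Hom X X') (v : Hom Y Y') : pi2 P X' Y' ⊚ pm u v = v ⊚ pi2 P X Y.
Proof. rewrite -pm_eq /prod_mor p2p. reflexivity. Qed.
Lemma p1pm' {X Y X' Y' W} (u : Hom X X') (v : Hom Y Y') (k : Hom W _) : pi1 P X' Y' ⊚ (pm u v ⊚ k) = u ⊚ (pi1 P X Y ⊚ k).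
Proof. rewrite comp_assoc p1pm ca. reflexivity. Qed.
Lemma p2pm' {X Y X' Y' W} (u : Hom X X') (v : Hom Y Y') (k : Hom W _) : pi2 P X' Y' ⊚ (pm u v ⊚ k) = v ⊚ (pi2 P X Y ⊚ k).
Proof. rewrite comp_assoc p2pm ca. reflexivity. Qed.
Lemma pm_pa {Z X Y X' Y'} (u : Hom X X') (v : Hom Y Y') (f : Hom Z X) (g : Hom Z Y) : pm u v ⊚ pa f g = pa (u ⊚ f) (v ⊚ g).
Proof. apply pairing_uniq; rewrite comp_assoc ?p1pm ?p2pm ca ?p1p ?p2p; reflexivity. Qed.
Lemma pm_pa' {Z X Y X' Y' W} (u : Hom X X') (v : Hom Y Y') (f : Hom Z X) (g : Hom Z Y) (k : Hom W Z) :
  pm u v ⊚ (pa f g ⊚ k) = pa (u ⊚ f) (v ⊚ g) ⊚ k.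
Proof. apply tail, pm_pa. Qed.

Lemma fext_hom' {X A} (a : Hom (K A) A) (f : Hom X A) : fext FA a f ⊚ phi X = a ⊚ pmap K (fext FA a f).
Proof. apply fext_hom. Qed.
Lemma fext_eta' {X A} (a : Hom (K A) A) (f : Hom X A) : fext FA a f ⊚ eta X = f.
Proof. apply fext_eta. Qed.
Lemma fext_uniq' {X A} (a : Hom (K A) A) (f : Hom X A) (h : Hom (M X) A) :
  h ⊚ phi X = a ⊚ pmap K h -> h ⊚ eta X = f -> h = fext FA a f.
Proof. apply fext_uniq. Qed.
Lemma hom_eq {X A} (a : Hom (K A) A) (h1 h2 : Hom (M X) A) :
  h1 ⊚ phi X = a ⊚ pmap K h1 -> h2 ⊚ phi X = a ⊚ pmap K h2 -> h1 ⊚ eta X = h2 ⊚ eta X -> h1 = h2.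
Proof. intros E1 E2 E3. rewrite (fext_uniq' _ _ _ E1 E3). symmetry. apply fext_uniq'; auto. Qed.

Lemma Mm_def {X Y} (f : Hom X Y) : Mm f = fext FA (phi Y) (eta Y ⊚ f). Proof. rewrite -Mm_eq. reflexivity. Qed.
Lemma shp_def {A} (a : Hom (K A) A) : shp a = fext FA a (idm A). Proof. rewrite -shp_eq. reflexivity. Qed.

Lemma Mm_eta {X Y} (f : Hom X Y) : Mm f ⊚ eta X = eta Y ⊚ f. Proof. rewrite Mm_def fext_eta'. reflexivity. Qed.
Lemma Mm_phi {X Y} (f : Hom X Y) : Mm f ⊚ phi X = phi Y ⊚ pmap K (Mm f). Proof. rewrite !Mm_def fext_hom'. reflexivity. Qed.
Lemma Mm_phi' {X Y W} (f : Hom X Y) (k : Hom W _) : Mm f ⊚ (phi X ⊚ k) = phi Y ⊚ (pmap K (Mm f) ⊚ k). Proof. rewrite comp_assoc Mm_phi ca. reflexivity. Qed.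
Lemma shp_eta {A} (a : Hom (K A) A) : shp a ⊚ eta A = idm A. Proof. rewrite shp_def fext_eta'. reflexivity. Qed.
Lemma shp_phi {A} (a : Hom (K A) A) : shp a ⊚ phi A = a ⊚ pmap K (shp a). Proof. rewrite !shp_def fext_hom'. reflexivity. Qed.
Lemma shp_phi' {A W} (a : Hom (K A) A) (k : Hom W _) : shp a ⊚ (phi A ⊚ k) = a ⊚ (pmap K (shp a) ⊚ k).
Proof. rewrite comp_assoc shp_phi ca. reflexivity. Qed.
Lemma Mm_eta' {X Y W} (f : Hom X Y) (k : Hom W X) : Mm f ⊚ (eta X ⊚ k) = eta Y ⊚ (f ⊚ k). Proof. rewrite comp_assoc Mm_eta ca. reflexivity. Qed.
Lemma shp_eta' {A W} (a : Hom (K A) A) (k : Hom W A) : shp a ⊚ (eta A ⊚ k) = k. Proof. rewrite comp_assoc shp_eta cidl. reflexivity. Qed.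

Lemma Kc' {X Y Z} (g : Hom Y Z) (f : Hom X Y) : pmap K g ⊚ pmap K f = pmap K (g ⊚ f). Proof. apply pfmap_comp. Qed.
Lemma Kc'' {X Y Z W} (g : Hom Y Z) (f : Hom X Y) (k : Hom W _) : pmap K g ⊚ (pmap K f ⊚ k) = pmap K (g ⊚ f) ⊚ k. Proof. apply pfmap_comp'. Qed.
Lemma Hc' {X Y Z} (g : Hom Y Z) (f : Hom X Y) : pmap H g ⊚ pmap H f = pmap H (g ⊚ f). Proof. apply pfmap_comp. Qed.
Lemma Hc'' {X Y Z W} (g : Hom Y Z) (f : Hom X Y) (k : Hom W _) : pmap H g ⊚ (pmap H f ⊚ k) = pmap H (g ⊚ f) ⊚ k. Proof. apply pfmap_comp'. Qed.
Lemma Kid X : pmap K (idm X) = idm _. Proof. apply fmap_id. Qed.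
Lemma Hid X : pmap H (idm X) = idm _. Proof. apply fmap_id. Qed.

Lemma homfext {X A B} (a : Hom (K A) A) (b' : Hom (K B) B) (g : Hom A B) (h : Hom X A) :
  g ⊚ a = b' ⊚ pmap K g -> g ⊚ fext FA a h = fext FA b' (g ⊚ h).
Proof.
  intro Hg. apply fext_uniq'.
  - rewrite ca fext_hom' comp_assoc Hg ca Kc'. reflexivity.
  - rewrite ca fext_eta'. reflexivity.
Qed.
Lemma fext_Mm {X Y A} (a : Hom (K A) A) (h : Hom Y A) (g : Hom X Y) : fext FA a h ⊚ Mm g = fext FA a (h ⊚ g).
Proof.
  apply fext_uniq'.
  - rewrite ca Mm_phi comp_assoc fext_hom' ca Kc'. reflexivity.
  - rewrite ca Mm_eta comp_assoc fext_eta'. reflexivity.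
Qed.
Lemma fext_shp {X A} (a : Hom (K A) A) (h : Hom X A) : fext FA a h = shp a ⊚ Mm h.
Proof. rewrite shp_def fext_Mm cidl. reflexivity. Qed.

Lemma Mm_id X : Mm (idm X) = idm (M X).
Proof. symmetry. rewrite Mm_def. apply fext_uniq'; rewrite ?cidl ?cidr ?Kid ?cidr; reflexivity. Qed.
Lemma Mm_comp {X Y Z} (g : Hom Y Z) (f : Hom X Y) : Mm g ⊚ Mm f = Mm (g ⊚ f).
Proof. rewrite {1}Mm_def fext_Mm ca -Mm_def. reflexivity. Qed.
Lemma Mm_comp' {X Y Z W} (g : Hom Y Z) (f : Hom X Y) (k : Hom W _) : Mm g ⊚ (Mm f ⊚ k) = Mm (g ⊚ f) ⊚ k.
Proof. apply tail, Mm_comp. Qed.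

Lemma shp_hom {A B} (a : Hom (K A) A) (b' : Hom (K B) B) (g : Hom A B) :
  g ⊚ a = b' ⊚ pmap K g -> g ⊚ shp a = shp b' ⊚ Mm g.
Proof. intro Hg. rewrite shp_def (homfext _ _ _ _ Hg) cidr fext_shp. reflexivity. Qed.

Definition muM X : Hom (M (M X)) (M X) := shp (phi X).
Lemma muM_eta X : muM X ⊚ eta (M X) = idm _. Proof. apply shp_eta. Qed.
Lemma muM_eta' X W (k : Hom W _) : muM X ⊚ (eta (M X) ⊚ k) = k. Proof. apply shp_eta'. Qed.
Lemma muM_phi X : muM X ⊚ phi (M X) = phi X ⊚ pmap K (muM X). Proof. apply shp_phi. Qed.
Lemma muM_Meta X : muM X ⊚ Mm (eta X) = idm _.
Proof.
  rewrite /muM shp_def fext_Mm cidl. symmetry. apply fext_uniq'; rewrite ?cidl ?Kid ?cidr; reflexivity.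
Qed.
Lemma muM_phi' X W (k : Hom W _) : muM X ⊚ (phi (M X) ⊚ k) = phi X ⊚ (pmap K (muM X) ⊚ k).
Proof. rewrite comp_assoc muM_phi ca. reflexivity. Qed.
Lemma muM_nat {X Y} (f : Hom X Y) : Mm f ⊚ muM X = muM Y ⊚ Mm (Mm f).
Proof. rewrite /muM (shp_hom _ _ _ (Mm_phi f)). reflexivity. Qed.
Lemma muM_assoc X : muM X ⊚ muM (M X) = muM X ⊚ Mm (muM X).
Proof. rewrite {1}/muM (shp_hom _ _ _ (muM_phi X)). reflexivity. Qed.
Lemma shp_mu {A} (a : Hom (K A) A) : shp a ⊚ muM A = shp a ⊚ Mm (shp a).
Proof. rewrite /muM (shp_hom _ _ _ (shp_phi a)). reflexivity. Qed.

Lemma pa_eta {Z X Y} (h : Hom Z (prodO P X Y)) : pa (pi1 P X Y ⊚ h) (pi2 P X Y ⊚ h) = h.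
Proof. symmetry. apply pairing_uniq; reflexivity. Qed.
Lemma pa_comp' {Z X Y W V} (f : Hom Z X) (g : Hom Z Y) (k : Hom W Z) (m : Hom V W) : pa f g ⊚ (k ⊚ m) = pa (f ⊚ k) (g ⊚ k) ⊚ m.
Proof. rewrite comp_assoc pa_comp. reflexivity. Qed.

Ltac mrm := repeat progress (rewrite ?ca ?cidl ?cidr ?p1p ?p2p ?p1p' ?p2p' ?p1pm ?p2pm ?p1pm' ?p2pm' ?pm_pa ?pm_pa' ?pa_comp ?pa_comp' ?Kc' ?Kc'' ?Hc' ?Hc'' ?Kid ?Hid ?Mm_eta ?Mm_eta' ?shp_eta ?shp_eta' ?Mm_comp ?Mm_comp' ?Mm_id ?muM_eta ?muM_eta';
  rewrite ?cpl ?cpr ?cpl' ?cpr' ?sml ?smr ?sml' ?smr' ?cp_sm ?cp_sm' ?sm_sm ?sm_sm' ?sm_id).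

Variable ell : forall X, Hom (K (prodO P (H X) X)) (H (M X)).
Hypothesis ell_nat0 : @is_GSOS_rule C P K H FA ell.
Lemma ell_nat {X Y} (f : Hom X Y) : ell Y ⊚ pmap K (pm (pmap H f) f) = pmap H (Mm f) ⊚ ell X.
Proof. rewrite -pm_eq -Mm_eq. apply ell_nat0. Qed.
Lemma ell_nat' {X Y W} (f : Hom X Y) (k : Hom W _) : ell Y ⊚ (pmap K (pm (pmap H f) f) ⊚ k) = pmap H (Mm f) ⊚ (ell X ⊚ k).
Proof. rewrite comp_assoc ell_nat ca. reflexivity. Qed.

Definition r X : Hom (K (prodO P (H (M X)) (M X))) (prodO P (H (M X)) (M X)) :=
  pa (pmap H (muM X) ⊚ ell (M X)) (phi X ⊚ pmap K (pi2 P _ _)).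
Definition rho X : Hom (M (prodO P (H X) X)) (prodO P (H (M X)) (M X)) :=
  fext FA (r X) (pa (pmap H (eta X) ⊚ pi1 P _ _) (eta X ⊚ pi2 P _ _)).

Lemma rho_eta X : rho X ⊚ eta _ = pa (pmap H (eta X) ⊚ pi1 P _ _) (eta X ⊚ pi2 P _ _).
Proof. apply fext_eta'. Qed.
Lemma rho_phi X : rho X ⊚ phi _ = r X ⊚ pmap K (rho X).
Proof. apply fext_hom'. Qed.
Lemma rho_eta' X W (k : Hom W _) : rho X ⊚ (eta _ ⊚ k) = pa (pmap H (eta X) ⊚ pi1 P _ _) (eta X ⊚ pi2 P _ _) ⊚ k.
Proof. apply tail, rho_eta. Qed.

Lemma rho_p2 X : pi2 P _ _ ⊚ rho X = Mm (pi2 P (H X) X).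
Proof.
  apply (hom_eq (phi X)).
  - rewrite ca rho_phi /r. mrm. reflexivity.
  - apply Mm_phi.
  - rewrite ca rho_eta Mm_eta. mrm. reflexivity.
Qed.

Lemma r_nat {X Y} (f : Hom X Y) : pm (pmap H (Mm f)) (Mm f) ⊚ r X = r Y ⊚ pmap K (pm (pmap H (Mm f)) (Mm f)).
Proof.
  rewrite /r. mrm. rewrite ?ell_nat ?ell_nat'. mrm. rewrite muM_nat Mm_phi'. mrm. reflexivity.
Qed.

Lemma rho_nat {X Y} (f : Hom X Y) : rho Y ⊚ Mm (pm (pmap H f) f) = pm (pmap H (Mm f)) (Mm f) ⊚ rho X.
Proof.
  apply (hom_eq (r Y)).
  - rewrite ca Mm_phi comp_assoc rho_phi ca Kc'. reflexivity.
  - rewrite ca rho_phi comp_assoc r_nat ca Kc'. reflexivity.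
  - rewrite ca Mm_eta comp_assoc rho_eta ca rho_eta. mrm. reflexivity.
Qed.

Lemma r_mu X : pm (pmap H (muM X)) (muM X) ⊚ r (M X) = r X ⊚ pmap K (pm (pmap H (muM X)) (muM X)).
Proof.
  rewrite /r. mrm. rewrite ?ell_nat ?ell_nat'. mrm. rewrite muM_assoc muM_phi'. mrm. reflexivity.
Qed.

Lemma rho_mu X : rho X ⊚ muM (prodO P (H X) X) = pm (pmap H (muM X)) (muM X) ⊚ rho (M X) ⊚ Mm (rho X).
Proof.
  apply (hom_eq (r X)).
  - rewrite ca muM_phi comp_assoc rho_phi ca Kc'. reflexivity.
  - rewrite !ca Mm_phi (comp_assoc (rho (M X))) rho_phi ca (comp_assoc (pm _ _)) r_mu !ca !Kc'. reflexivity.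
  - rewrite ca muM_eta cidr !ca Mm_eta (comp_assoc (rho (M X))) rho_eta. mrm. symmetry; apply pa_eta.
Qed.

Variable Tc : TerminalCoalgebra H.
Notation Cc := (tc_obj Tc).
Notation c := (tc_str Tc).
Variable b : Hom (K Cc) Cc.
Hypothesis b_eqn : c ⊚ b = pmap H (sharp FA b) ⊚ ell Cc ⊚ pmap K (pairing P c (idm Cc)).

Lemma b_eqn' : c ⊚ b = pmap H (shp b) ⊚ (ell Cc ⊚ pmap K (pa c (idm Cc))).
Proof. rewrite b_eqn shp_eq ca. reflexivity. Qed.

Lemma rho_c : c ⊚ shp b = pmap H (shp b) ⊚ (pi1 P _ _ ⊚ (rho Cc ⊚ Mm (pa c (idm Cc)))).
Proof.
  set (beta := pa (pmap H (shp b) ⊚ ell Cc) (b ⊚ pmap K (pi2 P (H Cc) Cc))).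
  assert (E : pa (c ⊚ shp b) (shp b) = pm (pmap H (shp b)) (shp b) ⊚ (rho Cc ⊚ Mm (pa c (idm Cc)))).
  { apply (hom_eq beta).
    - rewrite pa_comp !ca shp_phi comp_assoc b_eqn' /beta. mrm. reflexivity.
    - rewrite !ca Mm_phi (comp_assoc (rho Cc)) rho_phi /r /beta. mrm. rewrite (fmap_comp K (pm (pmap H (shp b)) (shp b))) ell_nat'. mrm.
      rewrite shp_mu shp_phi'. mrm. reflexivity.
    - rewrite pa_comp !ca shp_eta Mm_eta (comp_assoc (rho Cc)) rho_eta. mrm. reflexivity. }
  rewrite -(p1p (c ⊚ shp b) (shp b)) E. mrm. reflexivity.
Qed.

Variable cinv : Hom (H Cc) Cc.
Hypothesis cinv_l : cinv ⊚ c = idm Cc.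
Hypothesis cinv_r : c ⊚ cinv = idm (H Cc).

Lemma coal_eq {Z} (w0 : Hom Z (H Z)) (h1 h2 : Hom Z Cc) :
  c ⊚ h1 = pmap H h1 ⊚ w0 -> c ⊚ h2 = pmap H h2 ⊚ w0 -> h1 = h2.
Proof. intros E1 E2. rewrite (tc_unfold_uniq E1) (tc_unfold_uniq E2). reflexivity. Qed.

Definition kk : Hom (M (H (M Cc))) Cc := shp b ⊚ (Mm cinv ⊚ Mm (pmap H (shp b))).

Section CIA.
Variable X : C.
Variable e : Hom X (coprO S (M (H (M X))) Cc).
Notation Y := (coprO S (H (M X)) Cc).
Definition eps : Hom (coprO S (M (H (M X))) Cc) (M Y) := copair S (Mm (inl_ S _ _)) (eta Y ⊚ inr_ S _ _).
Definition delta : Hom Y (H (M Y)) :=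
  copair S (pmap H (muM Y ⊚ Mm (eps ⊚ e))) (pmap H (eta Y ⊚ inr_ S _ _) ⊚ c).
Definition ww : Hom (M Y) (H (M Y)) := pmap H (muM Y) ⊚ (pi1 P _ _ ⊚ (rho (M Y) ⊚ Mm (pa delta (eta Y)))).

Lemma ww_eta : ww ⊚ eta Y = delta.
Proof. rewrite /ww. mrm. rewrite rho_eta'. mrm. reflexivity. Qed.

Lemma pa_ww : pa ww (idm (M Y)) = pm (pmap H (muM Y)) (muM Y) ⊚ (rho (M Y) ⊚ Mm (pa delta (eta Y))).
Proof.
  apply pa_ext.
  - rewrite p1p p1pm' /ww. reflexivity.
  - rewrite p2p p2pm' (comp_assoc (pi2 P _ _)) rho_p2 Mm_comp p2p muM_Meta. reflexivity.
Qed.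

Lemma ww_mu : ww ⊚ muM Y = pmap H (muM Y) ⊚ (pi1 P _ _ ⊚ (rho (M Y) ⊚ Mm (pa ww (idm _)))).
Proof.
  rewrite pa_ww -Mm_comp (comp_assoc (rho (M Y))) rho_nat.
  rewrite /ww !ca muM_nat (comp_assoc (rho (M Y))) rho_mu.
  rewrite !ca p1pm' (comp_assoc (pmap H (muM Y))) Hc' muM_assoc -Hc' !ca.
  rewrite p1pm' Hc'' Mm_comp. rewrite ?Hc''. reflexivity.
Qed.

Lemma shp_Mm_mu {Z} (j : Hom Z Cc) : shp b ⊚ Mm (shp b ⊚ Mm j) = shp b ⊚ (Mm j ⊚ muM Z).
Proof. rewrite -Mm_comp comp_assoc -shp_mu ca muM_nat. reflexivity. Qed.

Definition qq : Hom (M Y) Cc := tc_unfold Tc ww.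
Lemma qq_spec : c ⊚ qq = pmap H qq ⊚ ww. Proof. apply tc_unfold_spec. Qed.

Lemma qq_mu : qq ⊚ muM Y = shp b ⊚ Mm qq.
Proof.
  apply (coal_eq (pi1 P _ _ ⊚ (rho (M Y) ⊚ Mm (pa ww (idm _))))).
  - rewrite comp_assoc qq_spec ca ww_mu Hc''. reflexivity.
  - rewrite comp_assoc rho_c !ca Mm_comp pa_comp cidl qq_spec.
    have -> : pa (pmap H qq ⊚ ww) qq = pm (pmap H qq) qq ⊚ pa ww (idm _) by rewrite pm_pa cidr.
    rewrite -(Mm_comp (pm (pmap H qq) qq)) (comp_assoc (rho Cc)) rho_nat !ca p1pm' Hc''.
    reflexivity.
Qed.

Lemma qq_shp : qq = shp b ⊚ Mm (qq ⊚ eta Y).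
Proof. rewrite -Mm_comp comp_assoc -qq_mu ca muM_Meta cidr. reflexivity. Qed.

Lemma qq_inr : qq ⊚ (eta Y ⊚ inr_ S _ _) = idm Cc.
Proof.
  apply (coal_eq c).
  - rewrite comp_assoc qq_spec ca (comp_assoc ww) ww_eta /delta cpr Hc''. reflexivity.
  - rewrite Hid cidl cidr. reflexivity.
Qed.

Lemma qq_inl : c ⊚ (qq ⊚ (eta Y ⊚ inl_ S _ _)) = pmap H (shp b ⊚ Mm (qq ⊚ (eps ⊚ e))).
Proof.
  rewrite comp_assoc qq_spec ca (comp_assoc ww) ww_eta /delta cpl Hc' comp_assoc qq_mu ca Mm_comp.
  reflexivity.
Qed.

Lemma kk_eq (h : Hom X Cc) : kk ⊚ Mm (pmap H (Mm h)) = shp b ⊚ Mm (cinv ⊚ pmap H (shp b ⊚ Mm h)).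
Proof. rewrite /kk. mrm. reflexivity. Qed.

Lemma cia_ex : exists h : Hom X Cc,
  h = copair S kk (idm Cc) ⊚ smO S (Mm (pmap H (Mm h))) (idm Cc) ⊚ e /\
  forall h', h' = copair S kk (idm Cc) ⊚ smO S (Mm (pmap H (Mm h'))) (idm Cc) ⊚ e -> h' = h.
Proof.
  exists (qq ⊚ (eps ⊚ e)). split.
  - rewrite cp_sm. rewrite {1}(comp_assoc qq). f_equal. apply cp_ext.
    + rewrite cpl kk_eq /eps ca cpl {1}qq_shp ca Mm_comp. f_equal. f_equal.
      rewrite ca -(cidl (qq ⊚ (eta Y ⊚ inl_ S _ _))) -cinv_l ca qq_inl. reflexivity.
    + rewrite cpr /eps ca cpr qq_inr ?cidl. reflexivity.
  - intros h' Hh'.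
    set (j' := copair S (cinv ⊚ pmap H (shp b ⊚ Mm h')) (idm Cc)).
    set (q' := shp b ⊚ Mm j').
    assert (Hq'eps : q' ⊚ eps = copair S (kk ⊚ Mm (pmap H (Mm h'))) (idm Cc)).
    { apply cp_ext.
      - rewrite cpl kk_eq /eps /q' ca cpl ca Mm_comp /j' cpl. reflexivity.
      - rewrite cpr /eps /q' ca cpr ca Mm_eta' shp_eta' /j' cpr. reflexivity. }
    assert (Hhq : h' = q' ⊚ (eps ⊚ e)).
    { rewrite comp_assoc Hq'eps {1}Hh' cp_sm cidl. reflexivity. }
    assert (Hq'eta : q' ⊚ eta Y = j'). { rewrite /q' ca Mm_eta shp_eta' . reflexivity. }
    assert (Hcj : pa (c ⊚ j') j' = pm (pmap H q') q' ⊚ pa delta (eta Y)).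
    { rewrite pm_pa Hq'eta. f_equal. apply cp_ext.
      - rewrite /j' /delta ca !cpl comp_assoc cinv_r cidl !ca cpl Hc'.
        congr (pmap H _). rewrite {1}Hhq -Mm_comp comp_assoc /q' shp_Mm_mu !ca. reflexivity.
      - rewrite /j' /delta ca !cpr cidr !ca cpr Hc'' (comp_assoc q') Hq'eta /j' cpr Hid cidl.
        reflexivity. }
    assert (Hcoal : c ⊚ q' = pmap H q' ⊚ ww).
    { rewrite /q' comp_assoc rho_c !ca Mm_comp pa_comp cidl Hcj -Mm_comp (comp_assoc (rho Cc)) rho_nat.
      rewrite !ca p1pm' Hc'' /q' shp_Mm_mu /ww Hc'' !ca. reflexivity. }
    rewrite Hhq (coal_eq _ _ _ Hcoal qq_spec). reflexivity.
Qed.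

End CIA.
End M.


Theorem mainTheorem8
  (C : Category) (P : BinProducts C) (S : BinCoproducts C)
  (K H V : Functor C)
  (FA : FreeAlgebras K)
  (Tc : TerminalCoalgebra H)
  (cinv : Hom (H (tc_obj Tc)) (tc_obj Tc))
  (cinv_l : cinv ⊚ tc_str Tc = idm (tc_obj Tc))
  (cinv_r : tc_str Tc ⊚ cinv = idm (H (tc_obj Tc)))
  (ell : forall X, Hom (K (prodO P (H X) X)) (H (Mo FA X)))
  (ell_nat : @is_GSOS_rule C P K H FA ell)
  (b : Hom (K (tc_obj Tc)) (tc_obj Tc))
  (b_interp : @is_ell_interpretation C P K H FA Tc ell b)
  (It : Iteratable S (sumF S (compF (MF FA) (compF H (MF FA))) V))
  (e : forall X, Hom (V X) (TG It X))
  (e_rps : @is_RPS C S _ V It e)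
  (e_guarded : @is_guarded C S _ V It e) :
  let L := compF (MF FA) (compF H (MF FA)) in
  let k' : Hom (L (tc_obj Tc)) (tc_obj Tc) :=
      sharp FA b ⊚ pmap (MF FA) cinv ⊚ pmap (MF FA) (pmap H (sharp FA b)) in
  (exists s : Hom (V (tc_obj Tc)) (tc_obj Tc),
      @is_interpreted_solution C S L V It e _ k' s /\
      (forall s', @is_interpreted_solution C S L V It e _ k' s' -> s' = s) /\
      @is_cia C S (sumF S L V) _ (copair S k' s)).
Proof.
  intros L k'.
  destruct b_interp as [b_eqn _].
  assert (pL : forall X Y (f : Hom X Y), pmap L f = Mm K FA (pmap H (Mm K FA f))).
  { intros X Y f. rewrite -!Mm_eq. reflexivity. }
  assert (Lid : forall X, pmap L (idm X) = idm (L X)).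
  { intros X. rewrite pL Mm_id Hid Mm_id. reflexivity. }
  assert (Lc : forall X Y Z (g : Hom Y Z) (f : Hom X Y), pmap L (g ⊚ f) = pmap L g ⊚ pmap L f).
  { intros X Y Z g f. rewrite !pL -Mm_comp -Hc' -Mm_comp. reflexivity. }
  assert (Vid : forall X, pmap V (idm X) = idm (V X)) by (intros; apply fmap_id).
  assert (Vc : forall X Y Z (g : Hom Y Z) (f : Hom X Y), pmap V (g ⊚ f) = pmap V g ⊚ pmap V f)
    by (intros; apply fmap_comp).
  assert (cia : @is_cia C S L (tc_obj Tc) k').
  { intros X e0.
    destruct (cia_ex P S K H FA ell ell_nat Tc b b_eqn cinv cinv_l cinv_r X e0) as [h [H1 H2]].
    assert (Ek : k' = kk K H FA Tc b cinv).
    { rewrite /k' /kk -!Mm_eq -!shp_eq ca. reflexivity. }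
    exists h. rewrite Ek pL smO_eq. split; [exact H1|].
    intros h' Hh'. apply H2. rewrite pL smO_eq in Hh'. exact Hh'. }
  exact (rps_main S L V Lid Lc Vid Vc It (tc_obj Tc) k' cia e e_guarded).
Qed.
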